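(* Let $\mathscr T^\otimes=(V,\mathcal E^\otimes)$ be the tensor product of rooted directed trees $\mathscr T_1,\dots,\mathscr T_d$, let $\mathscr T^\otimes_{\mathsf{root}}=(V^\otimes,\mathcal F)$ be the component of $\mathscr T^\otimes$ containing $\mathsf{root}=(\mathsf{root}_1,\dots,\mathsf{root}_d)$, let $\mathscr T$ be the directed Cartesian product of $\mathscr T_1,\dots,\mathscr T_d$, and let $\mathsf{Root}^\otimes=\{\mathfrak v\in V:\mathfrak v_j=\mathsf{root}_j\text{ for at least one }j\}$. Then: (i) if $\mathfrak v\in\mathsf{Root}^\otimes$, there is no $\mathfrak u\in V$ with $(\mathfrak u,\mathfrak v)\in\mathcal E^\otimes$; (ii) for each $\mathfrak v\in V\setminus\mathsf{Root}^\otimes$ there is a unique $\mathfrak u\in V$ with $(\mathfrak u,\mathfrak v)\in\mathcal E^\otimes$; (iii) $\mathscr T^\otimes$ has no circuits; (iv) no two distinct vertices of $\mathsf{Root}^\otimes$ can be connected by a path in $\mathscr T^\otimes$; (v) there is a bijective correspondence between the components of $\mathscr T^\otimes$ and the elements of $\mathsf{Root}^\otimes$; in particular $\mathscr T^\otimes$ has countably many components; (vi) each component is a rooted directed tree whose root lies in $\mathsf{Root}^\otimes$; (vii) $\mathscr T^\otimes$ is locally finite if and only if $\mathscr T$ is locally finite; (viii) $\mathscr T^\otimes$ is leafless; (ix) if each $\mathscr T_j$ has finite branching index $k_{\mathscr T_j}$, then the branching index of $\mathscr T^\otimes_{\mathsf{root}}$ equals $\max\{k_{\mathscr T_j}:1\le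 j\le d\}$; (x) for each $v\in V$ there exists $\mathfrak v\in V^\otimes$ such that $|\alpha_v|=\alpha_{\mathfrak v}$, where $\alpha_v$ is the depth of $v$ in $\mathscr T$ and $\alpha_{\mathfrak v}$ the depth of $\mathfrak v$ in the directed tree $\mathscr T^\otimes_{\mathsf{root}}$.
   Context: Directed graph: $(V,\mathcal E)$, $\mathcal E\subseteq V\times V$ without loops; circuits and paths as usual (a path joins two vertices by a sequence of distinct vertices with consecutive ones joined by an edge in either direction). A directed tree is connected, has no circuits, and every vertex with an incoming edge has exactly one (parent $\mathsf{par}(v)$); rooted: a (unique) vertex $\mathsf{root}$ without incoming edge. $\mathsf{Chi}(u)=\{v:(u,v)\in\mathcal E\}$; locally finite: all $\mathsf{Chi}(u)$ finite; leafless: all $\mathsf{Chi}(u)\ne\emptyset$; all directed trees are assumed leafless. Depth of $u$ in a rooted tree: $n$ with $u\in\mathsf{Chi}^n(\mathsf{root})$. Branching index: $1+\sup\{\text{depth}(w):\mathrm{card}\,\mathsf{Chi}(w)\ge2\}$ if such $w$ exist, else $0$. For rooted trees $\mathscr T_j=(V_j,\mathcal E_j)$ with roots $\mathsf{root}_j$: the tensor product is $\mathscr T^\otimes=(V,\mathcal E^\otimes)$, $V=V_1\times\dots\times V_d$, $(\mathfrak v,\mathfrak w)\in\mathcal E^\otimes$ iff $(\mathfrak v_j,\mathfrak w_j)\in\mathcal E_j$ for all $j$; the directed Cartesian product $\mathscr T=(V,\mathcal E)$ has $(v,w)\in\mathcal E$ iff for some $k$, $(v_k,w_k)\in\mathcal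 E_k$ and $w_j=v_j$ ($j\ne k$), and the depth of $v\in V$ in $\mathscr T$ is $\alpha_v\in\mathbb N^d$ with $j$-th entry the depth of $v_j$ in $\mathscr T_j$, $|\alpha_v|$ its entry sum. A component of $\mathscr T^\otimes$ is an equivalence class for the relation ''$\mathfrak v=\mathfrak w$ or $\mathfrak v,\mathfrak w$ connected by a path in $\mathscr T^\otimes$'', viewed with the induced edges. *)

(* Defs.v *)
From mathcomp Require Import all_boot.
From Stdlib Require Import List.
Set Implicit Arguments. Unset Strict Implicit. Unset Printing Implicit Defensive.

Section Graphs.
Variable V : Type.
Variable E : V -> V -> Prop.

Definition connected_by_path (u v : V) : Prop :=
  exists (n : nat) (p : nat -> V),
    p 0 = u /\ p n = v /\
    (forall i j, i <= n -> j <= n -> p i = p j -> i = j) /\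
    (forall i, i < n -> E (p i) (p i.+1) \/ E (p i.+1) (p i)).

Definition has_circuit : Prop :=
  exists (n : nat) (p : nat -> V),
    2 <= n /\
    (forall i j, i < n -> j < n -> p i = p j -> i = j) /\
    (forall i, i.+1 < n -> E (p i) (p i.+1)) /\
    E (p n.-1) (p 0).

Definition no_loops : Prop := forall v, ~ E v v.

Definition graph_connected : Prop :=
  forall u v, u <> v -> connected_by_path u v.

Definition directed_tree : Prop :=
  no_loops /\ graph_connected /\ ~ has_circuit /\
  (forall v u1 u2, E u1 v -> E u2 v -> u1 = u2).

Definition rooted_dtree (r : V) : Prop :=
  directed_tree /\ (forall u, ~ E u r).

Definition leafless : Prop := forall u, exists v, E u v.

Definition locally_finite : Prop :=
  forall u, exists s : list V, forall v, E u v -> In v s.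

(* Chi^n(r) membership: in_Chi_pow r n u  <->  u \in Chi^n(r);
   i.e. n is the depth of u in the tree rooted at r *)
Fixpoint in_Chi_pow (r : V) (n : nat) (u : V) : Prop :=
  match n with
  | 0 => u = r
  | n'.+1 => exists w, in_Chi_pow r n' w /\ E w u
  end.

Definition branching_vertex (w : V) : Prop :=
  exists v1 v2, v1 <> v2 /\ E w v1 /\ E w v2.

(* the branching index of the tree rooted at r is the (finite) number k:
   1 + sup{depth w : card Chi(w) >= 2} if such w exist, 0 otherwise *)
Definition branching_index_is (r : V) (k : nat) : Prop :=
  ((forall w, ~ branching_vertex w) /\ k = 0) \/
  ((exists w n, branching_vertex w /\ in_Chi_pow r n w /\ n.+1 = k) /\
   (forall w n, branching_vertex w -> in_Chi_pow r n w -> n.+1 <= k)).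

Definition comp_of (v : V) : V -> Prop :=
  fun w => v = w \/ connected_by_path v w.

Definition is_component (C : V -> Prop) : Prop :=
  exists v, forall w, C w <-> comp_of v w.

Definition induced (C : V -> Prop) : {x | C x} -> {x | C x} -> Prop :=
  fun x y => E (proj1_sig x) (proj1_sig y).

End Graphs.

Arguments induced {V} E C.

Definition countable_type (T : Type) : Prop :=
  exists f : T -> nat, injective f.

Section Products.
Variable d : nat.
Variable T : 'I_d -> Type.
Variable E : forall j, T j -> T j -> Prop.
Variable r : forall j, T j.

Definition prodV := forall j : 'I_d, T j.

Definition tensor_edge (v w : prodV) : Prop := forall j, E (v j) (w j).

Definition cart_edge (v w : prodV) : Prop :=
  exists k, E (v k) (w k) /\ (forall j, j <> k -> w j = v j).

Definition prod_root : prodV := fun j => r j.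

Definition RootT (v : prodV) : Prop := exists j, v j = r j.

Definition Vroot : prodV -> Prop := comp_of tensor_edge prod_root.

Definition Vroot_root : {x | Vroot x} := exist _ prod_root (or_introl erefl).

Definition Froot := induced tensor_edge Vroot.

Definition components := {C : prodV -> Prop | is_component tensor_edge C}.

End Products.

Arguments prodV {d} T.
Arguments tensor_edge {d T} E v w.
Arguments cart_edge {d T} E v w.
Arguments prod_root {d T} r j.
Arguments RootT {d T} r v.
Arguments Vroot {d T} E r _.
Arguments Vroot_root {d T} E r.
Arguments Froot {d T} E r _ _.
Arguments components {d T} E.

(* Main.v *)
Require Import Defs.
From mathcomp Require Import all_boot zify.
From Stdlib Require Import Classical ClassicalEpsilon FunctionalExtensionality PropExtensionality ProofIrrelevance.
Set Implicit Arguments. Unset Strict Implicit. Unset Printing Implicit Defensive.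

Lemma sig_eq (A : Type) (P : A -> Prop) (a b : {x | P x}) :
  proj1_sig a = proj1_sig b -> a = b.
Proof.
case: a b => [a pa] [b pb] /= e; subst b; by rewrite (proof_irrelevance _ pa pb).
Qed.

Section Gen.
Variable V : Type.
Variable E : V -> V -> Prop.

Definition walk (u v : V) : Prop :=
  exists n (p : nat -> V), p 0 = u /\ p n = v /\
    (forall i, i < n -> E (p i) (p i.+1) \/ E (p i.+1) (p i)).

Lemma walk_refl u : walk u u.
Proof. by exists 0, (fun _ => u). Qed.

Lemma walk_edge u v : E u v \/ E v u -> walk u v.
Proof.
move=> h; exists 1, (fun i => if i == 0 then u else v); split => //; split => //.
by case=> // _; left.
Qed.

Lemma walk_sym u v : walk u v -> walk v u.
Proof.
case=> n [p [h0 [hn hs]]]; exists n, (fun i => p (n - i)); split; first by rewrite subn0.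
split; first by rewrite subnn.
move=> i hi; have := hs (n - i.+1) ltac:(lia).
have -> : (n - i.+1).+1 = n - i by lia.
by case; [right|left].
Qed.

Lemma walk_trans u v w : walk u v -> walk v w -> walk u w.
Proof.
case=> n [p [h0 [hn hs]]] [m [q [g0 [gm gs]]]].
exists (n + m), (fun i => if i <= n then p i else q (i - n)); split => /=.
  by [rewrite ?leq0n].
split.
  case: ifP => h; last by rewrite addKn.
  have e : m = 0 by lia.
  by rewrite e addn0 hn -g0 -e.
move=> i hi; case: (ltnP i n) => h.
  by rewrite (ltnW h); apply: hs.
case: (eqVneq i n) => [->|ne].
  rewrite leqnn subSnn hn -g0; apply: gs; lia.
have hi' : (i <= n) = false by lia. rewrite hi'.
have -> : i.+1 - n = (i - n).+1 by lia.
apply: gs; lia.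
Qed.

Lemma path_walk u v : connected_by_path E u v -> walk u v.
Proof. case=> n [p [h0 [hn [_ hs]]]]; by exists n, p. Qed.

Lemma walk_path u v : walk u v -> u = v \/ connected_by_path E u v.
Proof.
case=> n0 [p0 H].
suff key : forall N n p, n <= N -> p 0 = u /\ p n = v /\
    (forall i, i < n -> E (p i) (p i.+1) \/ E (p i.+1) (p i)) ->
    u = v \/ connected_by_path E u v by exact: (key n0 n0 p0 (leqnn n0) H).
elim=> [|N IH] {H p0 n0} n p hn [h0 [hn' hs]].
  right; exists n, p; split => //; split => //; split => // i j hi hj _; lia.
case: (classic (forall i j, i <= n -> j <= n -> p i = p j -> i = j)) => hinj.
  by right; exists n, p.
have [i [j [hij [hjn hpij]]]] : exists i j, i < j /\ j <= n /\ p i = p j.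
  apply: NNPP => hno; apply: hinj => i j hi hj e.
  case: (ltngtP i j) => // h.
    by case: hno; exists i, j.
    by case: hno; exists j, i.
pose q k := if k <= i then p k else p (k + (j - i)).
apply: (IH (n - (j - i)) q); first lia.
rewrite /q; split => /=; first by [rewrite ?leq0n].
split.
  case: ifP => h; last by rewrite subnK; [|lia].
  have e : n - (j - i) = i by lia. have ej : j = n by lia. by rewrite e hpij ej.
move=> k hk; case: (ltngtP k i) => h.
  apply: hs; lia.
  have -> : k.+1 + (j - i) = (k + (j - i)).+1 by lia.
  apply: hs; lia.
subst k; rewrite hpij.
have -> : i.+1 + (j - i) = j.+1 by lia.
apply: hs; lia.
Qed.

Lemma lift_path (C : V -> Prop) (x y : {z | C z}) n (p : nat -> V) :
  p 0 = proj1_sig x -> p n = proj1_sig y ->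
  (forall i j, i <= n -> j <= n -> p i = p j -> i = j) ->
  (forall i, i < n -> E (p i) (p i.+1) \/ E (p i.+1) (p i)) ->
  (forall i, i <= n -> C (p i)) ->
  connected_by_path (induced E C) x y.
Proof.
move=> h0 hn hinj hs hC.
pose q i : {z | C z} :=
  match excluded_middle_informative (C (p i)) with
  | left h => exist _ (p i) h | right _ => x end.
have hq : forall i, i <= n -> proj1_sig (q i) = p i.
  move=> i hi; rewrite /q; case: excluded_middle_informative => //= h.
  by case: h; apply: hC.
exists n, q; split; first by apply: sig_eq; rewrite hq.
split; first by apply: sig_eq; rewrite hq.
split.
  move=> i j hi hj e; apply: hinj => //; by rewrite -hq // -(hq j) // e.
move=> i hi; rewrite /induced !hq //; [exact: hs|lia].
Qed.

Lemma lift_circuit (C : V -> Prop) :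
  has_circuit (induced E C) -> has_circuit E.
Proof.
case=> n [p [h2 [hinj [hs hl]]]].
exists n, (fun i => proj1_sig (p i)); split => //; split => //.
move=> i j hi hj e; apply: hinj => //; exact: sig_eq.
Qed.

End Gen.

Section Tree.
Variable V : Type.
Variable E : V -> V -> Prop.
Variable r : V.
Hypothesis hT : rooted_dtree E r.
Hypothesis hL : leafless E.

Let hpar : forall v u1 u2, E u1 v -> E u2 v -> u1 = u2.
Proof. by case: hT => [[_ [_ [_ h]]] _]. Qed.
Let hroot : forall u, ~ E u r.
Proof. by case: hT. Qed.
Let hconn : graph_connected E.
Proof. by case: hT => [[_ [h _]] _]. Qed.

Lemma path_forward n (p : nat -> V) : p 0 = r ->
  (forall i j, i <= n -> j <= n -> p i = p j -> i = j) ->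
  (forall i, i < n -> E (p i) (p i.+1) \/ E (p i.+1) (p i)) ->
  forall i, i < n -> E (p i) (p i.+1).
Proof.
move=> h0 hinj hs; elim=> [|i IH] hi.
  case: (hs 0 hi) => // h; by case: (hroot (u:=p 1)); rewrite -h0.
case: (hs i.+1 hi) => // h.
have e := hpar h (IH (ltnW hi)).
have := hinj _ _ hi (ltnW (ltnW hi)) e; lia.
Qed.

Lemma depth_ex x : exists n, in_Chi_pow E r n x.
Proof.
case: (classic (x = r)) => [->|ne]; first by exists 0.
case: (hconn (nesym ne)) => n [p [h0 [hn [hinj hs]]]].
have hf := path_forward h0 hinj hs.
exists n; rewrite -hn.
have : forall i, i <= n -> in_Chi_pow E r i (p i); last by apply; rewrite leqnn.
elim=> [|i IH] hi /=; first by rewrite h0.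
exists (p i); split; [apply: IH; exact: ltnW|exact: hf].
Qed.

Lemma depth_uniq n m x : in_Chi_pow E r n x -> in_Chi_pow E r m x -> n = m.
Proof.
elim: n m x => [|n IH] [|m] x /=.
- by [].
- move=> -> [w [_ h]]; by case: (hroot h).
- move=> [w [_ h]] e; subst x; by case: (hroot h).
- move=> [w [hw h]] [w' [hw' h']]; have e := hpar h h'; subst w'.
  by rewrite (IH m w).
Qed.

Definition dep (x : V) : nat := epsilon (inhabits 0) (fun n => in_Chi_pow E r n x).

Lemma dep_spec x : in_Chi_pow E r (dep x) x.
Proof. rewrite /dep; apply: (epsilon_spec (inhabits 0) (fun n => in_Chi_pow E r n x)); exact: depth_ex. Qed.

Lemma dep_eq n x : in_Chi_pow E r n x -> dep x = n.
Proof. move=> h; exact: (depth_uniq (dep_spec x) h). Qed.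

Lemma dep_edge u x : E u x -> dep x = (dep u).+1.
Proof. move=> h; apply: dep_eq => /=; exists u; split => //; exact: dep_spec. Qed.

Lemma dep0 x : dep x = 0 <-> x = r.
Proof.
split => [h|->]; last by apply: dep_eq.
by have := dep_spec x; rewrite h.
Qed.

Definition par (x : V) : V := epsilon (inhabits r) (fun u => E u x).

Lemma par_spec x : x <> r -> E (par x) x.
Proof.
move=> ne; rewrite /par; apply: (epsilon_spec (inhabits r) (fun u => E u x)).
have := dep_spec x; case: (dep x) => [/= e|n /= [w [_ h]]]; last by exists w.
by case: ne.
Qed.

Lemma par_edge u x : E u x -> par x = u.
Proof.
move=> h; apply: (hpar (par_spec _) h) => e; subst x; exact: (hroot h).
Qed.

Lemma dep_par x : x <> r -> dep x = (dep (par x)).+1.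
Proof. move=> ne; exact: dep_edge (par_spec ne). Qed.

Lemma ex_depth n : exists x, dep x = n.
Proof.
elim: n => [|n [x hx]]; first by exists r; apply/dep0.
case: (hL x) => y hy; exists y; by rewrite (dep_edge hy) hx.
Qed.

Lemma no_loop x : ~ E x x.
Proof. move=> h; have := dep_edge h; lia. Qed.

End Tree.

Section Prod.
Local Unset Implicit Arguments.
Variable d : nat.
Variable T : 'I_d -> Type.
Variable E : forall j, T j -> T j -> Prop.
Variable r : forall j, T j.
Hypothesis hd : 0 < d.
Hypothesis htree : forall j, rooted_dtree (E j) (r j).
Hypothesis hleaf : forall j, leafless (E j).
Local Set Implicit Arguments.

Let TE := tensor_edge E.
Definition depj j (x : T j) := dep (E j) (r j) x.
Definition parj j (x : T j) := par (E j) (r j) x.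
Definition parT (v : prodV T) : prodV T := fun j => parj (v j).
Definition j0 : 'I_d := Ordinal hd.
Definition mm (v : prodV T) : nat := \big[minn/depj (v j0)]_(j < d) depj (v j).

Lemma depj_edge j (x y : T j) : E j x y -> depj y = (depj x).+1.
Proof. exact: dep_edge. Qed.

Lemma depj0 j (x : T j) : depj x = 0 <-> x = r j.
Proof. exact: dep0. Qed.

Lemma parj_edge j (x y : T j) : E j x y -> parj y = x.
Proof. exact: par_edge. Qed.

Lemma parj_spec j (x : T j) : x <> r j -> E j (parj x) x.
Proof. exact: par_spec. Qed.

Lemma depj_par j (x : T j) : x <> r j -> depj x = (depj (parj x)).+1.
Proof. exact: dep_par. Qed.

Lemma tedge_dep u w j : TE u w -> depj (w j) = (depj (u j)).+1.
Proof. move=> h; exact: depj_edge (h j). Qed.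

Lemma tpar_uniq u1 u2 v : TE u1 v -> TE u2 v -> u1 = u2.
Proof.
move=> h1 h2; apply: functional_extensionality_dep => j.
by rewrite -(parj_edge (h1 j)) -(parj_edge (h2 j)).
Qed.

Lemma mm_le v j : mm v <= depj (v j).
Proof.
rewrite /mm.
have : forall s, j \in s -> \big[minn/depj (v j0)]_(i <- s) depj (v i) <= depj (v j).
  elim=> // x s IH; rewrite in_cons big_cons => /orP [/eqP->|h].
    exact: geq_minl.
  by rewrite geq_min IH ?orbT.
apply; exact: mem_index_enum.
Qed.

Lemma mm_att v : exists j, mm v = depj (v j).
Proof.
rewrite /mm; apply: (big_ind (fun x => exists j, x = depj (v j))).
- by exists j0.
- move=> x y [i ->] [k ->]; case: (leqP (depj (v i)) (depj (v k))) => h.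
    by exists i; move/minn_idPl: h.
  by exists k; move: (ltnW h) => /minn_idPr.
- by move=> i _; exists i.
Qed.

Lemma mm_edge u w : TE u w -> mm w = (mm u).+1.
Proof.
move=> h; rewrite /mm (eq_bigr (fun j => (depj (u j)).+1)); last first.
  by move=> j _; apply: tedge_dep.
rewrite (tedge_dep j0 h).
by rewrite (big_morph S (fun x y => esym (minnSS x y)) erefl).
Qed.

Lemma iter_parT k v j : (iter k parT v) j = iter k (@parj j) (v j).
Proof. by elim: k => //= k IH; rewrite /parT IH. Qed.

Lemma dep_iter j k (x : T j) : k <= depj x -> depj (iter k (@parj j) x) = depj x - k.
Proof.
elim: k => [|k IH] h /=; first by rewrite subn0.
have h1 := IH (ltnW h).
have ne : iter k (@parj j) x <> r j.
  move=> e; move: h1; rewrite e (proj2 (depj0 _) erefl); lia.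
move: h1; rewrite (depj_par ne); lia.
Qed.

Definition rho v := iter (mm v) parT v.

Lemma rho_dep v j : depj (rho v j) = depj (v j) - mm v.
Proof. by rewrite /rho iter_parT dep_iter // mm_le. Qed.

Lemma rho_root v : RootT r (rho v).
Proof.
case: (mm_att v) => j hj; exists j; apply/depj0; by rewrite rho_dep hj subnn.
Qed.

Lemma rho_id v : RootT r v -> rho v = v.
Proof.
case=> j hj; rewrite /rho.
have : mm v <= depj (v j) by exact: mm_le.
by rewrite hj (proj2 (depj0 _) erefl) leqn0 => /eqP ->.
Qed.

Lemma walk_down k v : k <= mm v -> walk TE (iter k parT v) v.
Proof.
elim: k => [|k IH] h; first exact: walk_refl.
apply: walk_trans (IH (ltnW h)); apply: walk_edge; left => j /=.
rewrite /parT; apply: parj_spec => e.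
have := dep_iter (x := v j) (k := k); rewrite -iter_parT e (proj2 (depj0 _) erefl).
have := mm_le v j; lia.
Qed.

Lemma rho_edge u w : TE u w -> rho w = rho u.
Proof.
move=> h; rewrite /rho (mm_edge h) iterSr.
have -> : parT w = u.
  apply: functional_extensionality_dep => j; exact: parj_edge (h j).
done.
Qed.

Lemma rho_walk u w : walk TE u w -> rho u = rho w.
Proof.
case=> n [p [h0 [hn hs]]]; rewrite -h0 -hn.
have : forall i, i <= n -> rho (p i) = rho (p 0); last by move/(_ n (leqnn n))->.
elim=> [|i IH] hi //; rewrite -IH ?(ltnW hi) //.
by case: (hs i hi) => h; [rewrite (rho_edge h)|rewrite (rho_edge h)].
Qed.

Lemma comp_rho u w : comp_of TE u w <-> rho u = rho w.
Proof.
split.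
  case=> [->//|h]; apply: rho_walk; exact: path_walk.
move=> e; apply: walk_path.
apply: (walk_trans (walk_sym (walk_down (leqnn (mm u))))).
rewrite -/(rho u) e; exact: walk_down.
Qed.


Definition D n (x : prodV T) := forall j, depj (x j) = n.

Lemma RootT_root : RootT r (prod_root r).
Proof. by exists j0. Qed.

Lemma Vroot_iff x : Vroot E r x <-> exists n, D n x.
Proof.
rewrite /Vroot -/TE comp_rho (rho_id RootT_root); split.
  move=> e; exists (mm x) => j.
  have h1 := rho_dep x j; rewrite -e /prod_root (proj2 (depj0 _) erefl) in h1.
  have := mm_le x j; lia.
case=> n hD; apply: functional_extensionality_dep => j; apply: esym; apply/depj0.
rewrite rho_dep; case: (mm_att x) => j' ->; rewrite !hD; lia.
Qed.

Lemma exD n : exists x, D n x.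
Proof.
exists (fun j => epsilon (inhabits (r j)) (fun y => depj y = n)) => j.
apply: (epsilon_spec (inhabits (r j)) (fun y : T j => depj y = n)).
exact: (ex_depth (htree j) (hleaf j)).
Qed.

Lemma child_vec (u : prodV T) : exists w, TE u w.
Proof.
exists (fun j => epsilon (inhabits (r j)) (E j (u j))) => j.
apply: (epsilon_spec (inhabits (r j)) (E j (u j))); exact: hleaf.
Qed.

Lemma Froot_depth n (w : {x | Vroot E r x}) :
  in_Chi_pow (Froot E r) (Vroot_root E r) n w <-> D n (proj1_sig w).
Proof.
elim: n w => [|n IH] w /=.
  split => [->|h] /=.
    by move=> j; apply/depj0.
  apply: sig_eq => /=; apply: functional_extensionality_dep => j; apply/depj0; exact: h.
split.
  case=> w' [hw' h] j; rewrite (tedge_dep j h); by rewrite (proj1 (IH w') hw').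
move=> hD.
have ne : forall j, proj1_sig w j <> r j.
  move=> j e; have := hD j; rewrite e (proj2 (depj0 _) erefl) //.
have hu : D n (parT (proj1_sig w)).
  move=> j; have := hD j; rewrite /parT (depj_par (ne j)); lia.
have hV : Vroot E r (parT (proj1_sig w)) by apply/Vroot_iff; exists n.
exists (exist _ _ hV); split; first by apply/IH.
move=> j /=; exact: parj_spec (ne j).
Qed.

Lemma in_In (X : eqType) (x : X) s : x \in s -> List.In x s.
Proof. elim: s => // y s IH; rewrite in_cons => /orP [/eqP->|h]; by [left|right; exact: IH]. Qed.

Lemma tree_LF_of_tensor : locally_finite TE -> forall k, locally_finite (E k).
Proof.
move=> hLF k x.
pose u := dfwith (prod_root r) x.
case: (hLF u) => s hs; exists (List.map (fun w => w k) s) => y hy.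
case: (child_vec u) => w0 hw0.
pose w := dfwith w0 y.
have hw : TE u w.
  move=> j; case: (eqVneq k j) => [<-|ne].
    by rewrite /u /w !dfwith_in.
  by rewrite /w dfwith_out.
have := List.in_map (fun w => w k) s w (hs w hw); by rewrite /w /= dfwith_in.
Qed.

Lemma tensor_LF_of_tree : (forall k, locally_finite (E k)) -> locally_finite TE.
Proof.
move=> hLF u.
pose L j := epsilon (inhabits nil) (fun s => forall y, E j (u j) y -> List.In y s).
have hL : forall j y, E j (u j) y -> List.In y (L j).
  move=> j; apply: (epsilon_spec (inhabits nil) (fun s => forall y, E j (u j) y -> List.In y s)).
  exact: hLF.
case: (child_vec u) => w0 hw0.
have claim : forall n, exists s, forall w, TE u w ->
    (forall j : 'I_d, n <= j -> w j = w0 j) -> List.In w s.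
  elim=> [|n [s hs]].
    exists (w0 :: nil) => w hw hc; left; apply: functional_extensionality_dep => j.
    by rewrite hc.
  case: (ltnP n d) => hnd; last first.
    exists s => w hw hc; apply: hs => // j hj; have := ltn_ord j; lia.
  pose jn := Ordinal hnd.
  exists (List.flat_map (fun w => List.map (fun y => dfwith w y) (L jn)) s) => w hw hc.
  pose w' := dfwith w (w0 jn).
  have hw' : TE u w'.
    move=> j; case: (eqVneq jn j) => [<-|ne]; first by rewrite /w' dfwith_in.
    by rewrite /w' dfwith_out.
  have hc' : forall j : 'I_d, n <= j -> w' j = w0 j.
    move=> j hj; case: (eqVneq jn j) => [<-|ne]; first by rewrite /w' dfwith_in.
    rewrite /w' dfwith_out //; apply: hc.
    have : n != j by apply/eqP => e; case/eqP: ne; apply: val_inj.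
    lia.
  apply/List.in_flat_map; exists w'; split; first exact: hs.
  have -> : w = dfwith w' (w jn).
    apply: functional_extensionality_dep => j; case: (eqVneq jn j) => [<-|ne].
      by rewrite dfwith_in.
    by rewrite dfwith_out // /w' dfwith_out.
  apply: List.in_map; exact: hL.
case: (claim d) => s hs; exists s => w hw; apply: hs => // j hj.
have := ltn_ord j; lia.
Qed.

Lemma tree_LF_of_cart : locally_finite (cart_edge E) -> forall k, locally_finite (E k).
Proof.
move=> hLF k x.
pose u := dfwith (prod_root r) x.
case: (hLF u) => s hs; exists (List.map (fun w => w k) s) => y hy.
pose w := dfwith u y.
have hw : cart_edge E u w.
  exists k; split; first by rewrite /w /u !dfwith_in.
  move=> j ne; rewrite /w dfwith_out //; by apply/eqP => e; apply: ne.
have := List.in_map (fun w => w k) s w (hs w hw); by rewrite /w /= dfwith_in.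
Qed.

Lemma cart_LF_of_tree : (forall k, locally_finite (E k)) -> locally_finite (cart_edge E).
Proof.
move=> hLF u.
pose L j := epsilon (inhabits nil) (fun s => forall y, E j (u j) y -> List.In y s).
have hL : forall j y, E j (u j) y -> List.In y (L j).
  move=> j; apply: (epsilon_spec (inhabits nil) (fun s => forall y, E j (u j) y -> List.In y s)).
  exact: hLF.
exists (List.flat_map (fun k => List.map (fun y => dfwith u y) (L k)) (enum 'I_d)).
move=> w [k [hk ho]].
apply/List.in_flat_map; exists k; split; first by apply: in_In; rewrite mem_enum.
have -> : w = dfwith u (w k).
  apply: functional_extensionality_dep => j; case: (eqVneq k j) => [<-|ne].
    by rewrite dfwith_in.
  rewrite dfwith_out // ho //; by move=> e; rewrite e eqxx in ne.
apply: List.in_map; exact: hL.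
Qed.


Lemma no_circuit : ~ has_circuit TE.
Proof.
case=> n [p [h2 [hinj [hs hl]]]].
have key : forall k, k < n -> depj (p k j0) = depj (p 0 j0) + k.
  elim=> [|k IH] hk; first by rewrite addn0.
  rewrite (tedge_dep j0 (hs k hk)) IH; [lia|exact: ltnW].
have := tedge_dep j0 hl; rewrite (key n.-1); lia.
Qed.

Lemma part_i v : RootT r v -> ~ exists u, TE u v.
Proof.
case=> j hj [u hu]; have := hu j; rewrite hj; by case: (htree j) => _ /(_ (u j)).
Qed.

Lemma part_ii v : ~ RootT r v -> exists! u, TE u v.
Proof.
move=> hv; exists (parT v); split.
  move=> j; apply: parj_spec => e; apply: hv; by exists j.
move=> u hu; apply: tpar_uniq hu; move=> j; apply: parj_spec => e; apply: hv; by exists j.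
Qed.

Lemma part_iv v w : RootT r v -> RootT r w -> v <> w -> ~ connected_by_path TE v w.
Proof.
move=> hv hw ne h; apply: ne; rewrite -(rho_id hv) -(rho_id hw); apply: rho_walk.
exact: path_walk.
Qed.

Definition elt (C : components E) : prodV T :=
  epsilon (inhabits (prod_root r)) (proj1_sig C).

Lemma elt_spec C : proj1_sig C (elt C).
Proof.
rewrite /elt; apply: (epsilon_spec (inhabits (prod_root r)) (proj1_sig C)).
case: C => C [v hv] /=; exists v; apply/hv; by left.
Qed.

Lemma C_iff (C : components E) y : proj1_sig C y <-> rho y = rho (elt C).
Proof.
have he := elt_spec C.
case: C he => C [v hv] /= he.
have e1 : rho v = rho (elt (exist _ C (ex_intro _ v hv))).
  apply/comp_rho; exact/hv.
rewrite -e1 hv comp_rho; split; by move=> ->.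
Qed.

Definition fcomp (C : components E) : {v : prodV T | RootT r v} :=
  exist _ (rho (elt C)) (rho_root _).

Definition gcomp (x : {v : prodV T | RootT r v}) : components E :=
  exist (is_component TE) (comp_of TE (proj1_sig x))
    (ex_intro (fun v => forall w, comp_of TE (proj1_sig x) w <-> comp_of TE v w) (proj1_sig x) (fun w => iff_refl _)).

Lemma fcomp_bij : bijective fcomp.
Proof.
exists gcomp.
  move=> C; apply: sig_eq => /=.
  apply: functional_extensionality => y; apply: propositional_extensionality.
  rewrite comp_rho C_iff (rho_id (rho_root _)); split; by move=> ->.
move=> x; apply: sig_eq => /=.
have h := elt_spec (gcomp x); rewrite /= comp_rho in h.
by rewrite -h (rho_id (proj2_sig x)).
Qed.

Lemma comps_countable : (forall j, countable_type (T j)) ->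
  exists g : components E -> nat, injective g.
Proof.
move=> hc.
pose cj j := proj1_sig (constructive_indefinite_description _ (hc j)).
have hcj : forall j, injective (cj j).
  move=> j; exact: (proj2_sig (constructive_indefinite_description _ (hc j))).
pose code (v : prodV T) := pickle [seq cj j (v j) | j <- enum 'I_d].
exists (fun C => code (proj1_sig (fcomp C))) => C C' e.
apply: (bij_inj fcomp_bij); apply: sig_eq.
move/(pcan_inj pickleK_inv): e => /eq_in_map e.
apply: functional_extensionality_dep => j; apply: (hcj j); apply: e.
by rewrite mem_enum.
Qed.

Lemma part_vi (C : components E) : exists rt : {x | proj1_sig C x},
     RootT r (proj1_sig rt) /\ rooted_dtree (induced TE (proj1_sig C)) rt.
Proof.
have hrt : proj1_sig C (rho (elt C)) by apply/C_iff; rewrite (rho_id (rho_root _)).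
exists (exist _ _ hrt); split; first exact: rho_root.
split; last first.
  move=> u h; case: (rho_root (elt C)) => j hj; have := h j; rewrite /= hj.
  by case: (htree j) => _ /(_ (proj1_sig u j)).
split.
  move=> x h; have := tedge_dep j0 h; lia.
split.
  move=> x y ne.
  have nev : proj1_sig x <> proj1_sig y by move=> e; apply: ne; exact: sig_eq.
  have ex : rho (proj1_sig x) = rho (proj1_sig y).
    by rewrite (proj1 (C_iff _ _) (proj2_sig x)) (proj1 (C_iff _ _) (proj2_sig y)).
  case: (proj2 (comp_rho _ _) ex) => // [[n [p [h0 [hn [hinj hs]]]]]].
  apply: (lift_path h0 hn hinj hs) => i hi; apply/C_iff.
  rewrite -(proj1 (C_iff _ _) (proj2_sig x)) -h0; apply: esym; apply: rho_walk.
  exists i, p; split => //; split => // k hk; apply: hs; lia.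
split.
  move/lift_circuit; exact: no_circuit.
move=> v u1 u2 h1 h2; apply: sig_eq; exact: tpar_uniq h1 h2.
Qed.

Lemma Froot_branch_tree (w : {x | Vroot E r x}) :
  branching_vertex (Froot E r) w -> exists j, branching_vertex (E j) (proj1_sig w j).
Proof.
case=> v1 [v2 [ne [h1 h2]]].
have nev : proj1_sig v1 <> proj1_sig v2 by move=> e; apply: ne; exact: sig_eq.
apply: NNPP => hno; apply: nev; apply: functional_extensionality_dep => j.
apply: NNPP => nej; apply: hno; exists j, (proj1_sig v1 j), (proj1_sig v2 j).
split; first exact: nej. split; [exact: (h1 j)|exact: (h2 j)].
Qed.

Lemma tree_branch_Froot j (x : T j) n : branching_vertex (E j) x -> depj x = n ->
  exists w : {x | Vroot E r x}, branching_vertex (Froot E r) w /\ D n (proj1_sig w).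
Proof.
case=> y1 [y2 [ne [h1 h2]]] hx.
case: (exD n) => c hc.
pose w := dfwith c x.
have hw : D n w.
  move=> i; case: (eqVneq j i) => [<-|nei]; first by rewrite /w dfwith_in.
  by rewrite /w dfwith_out.
case: (child_vec w) => c' hc'.
pose v1 := dfwith c' y1. pose v2 := dfwith c' y2.
have he1 : TE w v1.
  move=> i; case: (eqVneq j i) => [<-|nei]; first by rewrite /v1 /w !dfwith_in.
  by rewrite /v1 dfwith_out.
have he2 : TE w v2.
  move=> i; case: (eqVneq j i) => [<-|nei]; first by rewrite /v2 /w !dfwith_in.
  by rewrite /v2 dfwith_out.
have hV : forall u, D n u -> Vroot E r u by move=> u hu; apply/Vroot_iff; exists n.
have hV1 : Vroot E r v1 by apply/Vroot_iff; exists n.+1 => i; rewrite (tedge_dep i he1) hw.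
have hV2 : Vroot E r v2 by apply/Vroot_iff; exists n.+1 => i; rewrite (tedge_dep i he2) hw.
exists (exist _ w (hV _ hw)); split => //.
exists (exist _ v1 hV1), (exist _ v2 hV2); split.
  move=> e; apply: ne; have := f_equal (fun u => proj1_sig u j) e.
  by rewrite /= /v1 /v2 !dfwith_in.
by split.
Qed.

Lemma part_ix (k : 'I_d -> nat) : (forall j, branching_index_is (E j) (r j) (k j)) ->
     branching_index_is (Froot E r) (Vroot_root E r) (\max_(j < d) k j).
Proof.
move=> hk.
have bound : forall w n, branching_vertex (Froot E r) w ->
    in_Chi_pow (Froot E r) (Vroot_root E r) n w -> n.+1 <= \max_(j < d) k j.
  move=> w n hb hn; case: (Froot_branch_tree hb) => j hj.
  have hD := proj1 (Froot_depth n w) hn.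
  case: (hk j) => [[hno _]|[_ hb']]; first by case: (hno _ hj).
  have hc : in_Chi_pow (E j) (r j) n (proj1_sig w j) by rewrite -(hD j); exact: dep_spec.
  apply: leq_trans (hb' _ n hj hc) _.
  exact: leq_bigmax.
case: (eqVneq (\max_(j < d) k j) 0) => hM.
  left; split => // w hb.
  case: (Froot_branch_tree hb) => j hj.
  have := bound w (depj (proj1_sig w j)) hb.
  rewrite hM ltn0 => H; suff : false by []; apply: H; apply/Froot_depth.
  have := proj2_sig w => /Vroot_iff [m hm].
  move=> i; by rewrite !hm.
right; split => //.
have hcard : 0 < #|'I_d| by rewrite card_ord.
case: (eq_bigmax k hcard) => i0 hi0.
case: (hk i0) => [[_ e]|[[x [n [bx [hx e]]]] _]].
  by move: hM; rewrite hi0 e eqxx.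
case: (tree_branch_Froot bx (dep_eq (htree i0) hx)) => w [hb hw].
exists w, n; split => //; split; first exact/Froot_depth.
by rewrite hi0 e.
Qed.

Lemma part_x (N : nat) : exists w : {x | Vroot E r x},
   in_Chi_pow (Froot E r) (Vroot_root E r) N w.
Proof.
case: (exD N) => x hx.
have hV : Vroot E r x by apply/Vroot_iff; exists N.
by exists (exist _ x hV); apply/Froot_depth.
Qed.

End Prod.

Theorem mainTheorem10 (d : nat) (T : 'I_d -> Type)
  (E : forall j, T j -> T j -> Prop) (r : forall j, T j)
  (hd : 0 < d)
  (htree : forall j, rooted_dtree (E j) (r j))
  (hleaf : forall j, leafless (E j))
  (hcount : forall j, countable_type (T j)) :
  (* (i) *)
  (forall v : prodV T, RootT r v -> ~ exists u, tensor_edge E u v) /\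
  (* (ii) *)
  (forall v : prodV T, ~ RootT r v -> exists! u, tensor_edge E u v) /\
  (* (iii) *)
  ~ has_circuit (tensor_edge E) /\
  (* (iv) *)
  (forall v w : prodV T, RootT r v -> RootT r w -> v <> w ->
     ~ connected_by_path (tensor_edge E) v w) /\
  (* (v) *)
  (exists f : components E -> {v : prodV T | RootT r v}, bijective f) /\
  (exists g : components E -> nat, injective g) /\
  (* (vi) *)
  (forall C : components E, exists rt : {x | proj1_sig C x},
     RootT r (proj1_sig rt) /\
     rooted_dtree (induced (tensor_edge E) (proj1_sig C)) rt) /\
  (* (vii) *)
  (locally_finite (tensor_edge E) <-> locally_finite (cart_edge E)) /\
  (* (viii) *)
  leafless (tensor_edge E) /\
  (* (ix) *)
  (forall k : 'I_d -> nat, (forall j, branching_index_is (E j) (r j) (k j)) ->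
     branching_index_is (Froot E r) (Vroot_root E r) (\max_(j < d) k j)) /\
  (* (x) *)
  (forall (v : prodV T) (alpha : 'I_d -> nat),
     (forall j, in_Chi_pow (E j) (r j) (alpha j) (v j)) ->
     exists w : {x | Vroot E r x},
       in_Chi_pow (Froot E r) (Vroot_root E r) (\sum_(j < d) alpha j) w).
Proof.
split; first exact: (part_i htree).
split; first exact: (part_ii htree).
split; first exact: (no_circuit hd htree).
split; first exact: (part_iv hd htree).
split; first by exists (fcomp hd htree); exact: fcomp_bij.
split; first exact: (comps_countable hd htree hcount).
split; first exact: (part_vi hd htree).
split.
  split => h.
    apply: cart_LF_of_tree => k; exact: (tree_LF_of_tensor r hleaf h).
  apply: (tensor_LF_of_tree r hd hleaf) => k; exact: (tree_LF_of_cart r h).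
split; first exact: (child_vec r hleaf).
split; first by move=> k hk; exact: (part_ix hd htree hleaf hk).
move=> v alpha _; exact: (part_x hd htree hleaf).
Qed.
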